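(* Let $\mathsf V$ be a quantale, $X=(X,a)$ a $\mathsf V$-category and $s=(x_n)_{n\in\mathbb N}$ a Cauchy sequence in $X$. Put $\widetilde s=(x_n^* )_{n\in\mathbb N}$, a sequence in $[X^{\mathrm{op}},\mathsf V]$. Then $\widetilde s$ converges to $\psi_s$ in $[X^{\mathrm{op}},\mathsf V]$. If moreover $k=\top$ is the top element of $\mathsf V$, then for every $\psi\in[X^{\mathrm{op}},\mathsf V]$, if $\widetilde s$ converges to $\psi$ then $\psi=\psi_s$.
   Context: A quantale $(\mathsf V,\otimes,k)$ is a complete anti-symmetric lattice with an associative, commutative operation $\otimes$ with neutral element $k$ distributing over arbitrary suprema; $\hom(u,-)$ is the right adjoint of $u\otimes-$. A $\mathsf V$-category $(X,a)$ is a set with $a:X\times X\to\mathsf V$ such that $k\le a(x,x)$ and $a(x,y)\otimes a(y,z)\le a(x,z)$. $[X^{\mathrm{op}},\mathsf V]$ is the $\mathsf V$-category whose elements are the maps $\psi:X\to\mathsf V$ with $a(x,x')\otimes\psi(x')\le\psi(x)$ (i.e. $\mathsf V$-modules $X\rightharpoonup E$), with structure $[\psi,\psi']=\bigwedge_{x\in X}\hom(\psi(x),\psi'(x))$. For $x\in X$, $x^*\in[X^{\mathrm{op}},\mathsf V]$ is $y\mapsto a(y,x)$. For a sequence $s=(x_n)$: $\mathrm{Cauchy}(s)=\bigvee_N\bigwedge_{n,m\ge N}a(x_n,x_m)$, $s$ is Cauchy if $k\le\mathrm{Cauchy}(s)$; $\psi_s(y)=\bigvee_N\bigwedge_{n\ge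 N}a(y,x_n)$. In a $\mathsf V$-category $(Z,c)$, for $M\subseteq Z$, $\overline M=\{z\mid k\le\bigvee_{y\in M}c(z,y)\otimes c(y,z)\}$, and a sequence $(z_n)$ converges to $z$ if $z\in\overline{\{z_n\mid n\in M\}}$ for every infinite $M\subseteq\mathbb N$. *)

(* Defs.v *)
From Stdlib Require Import Arith.

Record quantale := Quantale {
  qT :> Type;
  qle : qT -> qT -> Prop;
  qsup : (qT -> Prop) -> qT;
  qtens : qT -> qT -> qT;
  qk : qT;
  qle_refl : forall x, qle x x;
  qle_trans : forall x y z, qle x y -> qle y z -> qle x z;
  qle_antisym : forall x y, qle x y -> qle y x -> x = y;
  qsup_ub : forall (S : qT -> Prop) x, S x -> qle x (qsup S);
  qsup_least : forall (S : qT -> Prop) y,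
      (forall x, S x -> qle x y) -> qle (qsup S) y;
  qtensA : forall x y z, qtens x (qtens y z) = qtens (qtens x y) z;
  qtensC : forall x y, qtens x y = qtens y x;
  qtens1 : forall x, qtens qk x = x;
  qtens_sup : forall u (S : qT -> Prop),
      qtens u (qsup S) = qsup (fun v => exists w, S w /\ v = qtens u w)
}.

Arguments qle {V} : rename.
Arguments qsup {V} : rename.
Arguments qtens {V} : rename.
Arguments qk V : rename.

Section Quantale.
Variable V : quantale.

Definition qsupI {I : Type} (f : I -> V) : V :=
  qsup (fun v => exists i, v = f i).
Definition qinf (S : V -> Prop) : V :=
  qsup (fun y => forall x, S x -> qle y x).
Definition qinfI {I : Type} (f : I -> V) : V :=
  qinf (fun v => exists i, v = f i).
Definition qtop : V := qsup (fun _ => True).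

(* hom(u,-): right adjoint of u (x) -  *)
Definition qhom (u v : V) : V := qsup (fun w => qle (qtens u w) v).

Definition is_Vcat {X : Type} (a : X -> X -> V) : Prop :=
  (forall x, qle (qk V) (a x x)) /\
  (forall x y z, qle (qtens (a x y) (a y z)) (a x z)).

(* elements of [X^op, V]: maps psi with a(x,x') (x) psi(x') <= psi(x) *)
Definition is_module {X : Type} (a : X -> X -> V) (psi : X -> V) : Prop :=
  forall x x', qle (qtens (a x x') (psi x')) (psi x).

(* the V-category structure of [X^op, V] *)
Definition presheaf_hom {X : Type} (psi psi' : X -> V) : V :=
  qinfI (fun x : X => qhom (psi x) (psi' x)).

(* x^* : y |-> a(y,x) *)
Definition rep {X : Type} (a : X -> X -> V) (x : X) : X -> V :=
  fun y => a y x.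

Definition Cauchy_val {X : Type} (a : X -> X -> V) (s : nat -> X) : V :=
  qsupI (fun N : nat =>
    qinf (fun v => exists n m, N <= n /\ N <= m /\ v = a (s n) (s m))).
Definition is_Cauchy {X : Type} (a : X -> X -> V) (s : nat -> X) : Prop :=
  qle (qk V) (Cauchy_val a s).

Definition psi_s {X : Type} (a : X -> X -> V) (s : nat -> X) : X -> V :=
  fun y => qsupI (fun N : nat =>
    qinf (fun v => exists n, N <= n /\ v = a y (s n))).

Definition closure {Z : Type} (c : Z -> Z -> V) (M : Z -> Prop) (z : Z) : Prop :=
  qle (qk V) (qsup (fun v => exists y, M y /\ v = qtens (c z y) (c y z))).

Definition infinite_nat (M : nat -> Prop) : Prop :=
  forall N, exists n, N <= n /\ M n.

Definition converges {Z : Type} (c : Z -> Z -> V) (z : nat -> Z) (l : Z) : Prop :=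
  forall M : nat -> Prop, infinite_nat M ->
    closure c (fun y => exists n, M n /\ y = z n) l.

End Quantale.

Arguments qtop V : clear implicits.

(* Main.v *)
Require Import Defs.
From Stdlib Require Import Arith Lia FunctionalExtensionality.

Lemma le_sup (V : quantale) (S : V -> Prop) (x y : V) : S x -> qle y x -> qle y (qsup S).
Proof. intros Hx H. eapply qle_trans; [exact H| apply qsup_ub; exact Hx]. Qed.

Lemma le_inf (V : quantale) (S : V -> Prop) (y : V) :
  (forall x, S x -> qle y x) -> qle y (qinf V S).
Proof. intros H. unfold qinf. apply qsup_ub. exact H. Qed.

Lemma inf_le (V : quantale) (S : V -> Prop) (x : V) : S x -> qle (qinf V S) x.
Proof. intros Hx. unfold qinf. apply qsup_least. intros y Hy. apply Hy, Hx. Qed.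

Lemma tens_mono_r (V : quantale) (u y z : V) : qle y z -> qle (qtens u y) (qtens u z).
Proof.
  intros H.
  assert (Hz : z = qsup (fun w => w = y \/ w = z)).
  { apply qle_antisym. apply qsup_ub; auto.
    apply qsup_least. intros x [->| ->]; auto using qle_refl. }
  rewrite Hz, qtens_sup. apply qsup_ub. exists y; auto.
Qed.

Lemma tens_mono (V : quantale) (u v y z : V) : qle u v -> qle y z -> qle (qtens u y) (qtens v z).
Proof.
  intros H1 H2. eapply qle_trans. apply tens_mono_r, H2.
  rewrite (qtensC _ u), (qtensC _ v). apply tens_mono_r, H1.
Qed.

Lemma tens_sup_le (V : quantale) (u : V) (S : V -> Prop) (v : V) :
  (forall w, S w -> qle (qtens u w) v) -> qle (qtens u (qsup S)) v.
Proof.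
  intros H. rewrite qtens_sup. apply qsup_least. intros x [w [Hw ->]]. auto.
Qed.

Lemma tens_sup_le_l (V : quantale) (u : V) (S : V -> Prop) (v : V) :
  (forall w, S w -> qle (qtens w u) v) -> qle (qtens (qsup S) u) v.
Proof.
  intros H. rewrite qtensC. apply tens_sup_le. intros w Hw. rewrite qtensC; auto.
Qed.

Lemma adj1 (V : quantale) (u w v : V) : qle (qtens u w) v -> qle w (qhom V u v).
Proof. intros H. unfold qhom. apply qsup_ub. exact H. Qed.

Lemma adj2 (V : quantale) (u w v : V) : qle w (qhom V u v) -> qle (qtens u w) v.
Proof.
  intros H. eapply qle_trans. apply tens_mono_r, H.
  unfold qhom. apply tens_sup_le. auto.
Qed.

Theorem proposition3p17 (V : quantale) (X : Type) (a : X -> X -> V)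
  (HX : is_Vcat V a) (s : nat -> X) (Hs : is_Cauchy V a s) :
  (is_module V a (psi_s V a s) /\
   converges V (@presheaf_hom V X) (fun n => rep V a (s n)) (psi_s V a s)) /\
  (qk V = qtop V ->
   forall psi : X -> V, is_module V a psi ->
     converges V (@presheaf_hom V X) (fun n => rep V a (s n)) psi ->
     psi = psi_s V a s).
Proof.
  destruct HX as [Hrefl Htrans].
  set (c := fun N => qinf V (fun v => exists n m, N <= n /\ N <= m /\ v = a (s n) (s m))).
  assert (Hc : forall N n m, N <= n -> N <= m -> qle (c N) (a (s n) (s m))).
  { intros N n m H1 H2. apply inf_le. exists n, m; auto. }
  assert (HCv : qle (qk V) (qsup (fun v => exists N, v = c N))) by exact Hs.
  assert (Hpsi : forall y N w, (forall n, N <= n -> qle w (a y (s n))) -> qle w (psi_s V a s y)).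
  { intros y N w H. unfold psi_s, qsupI. eapply le_sup. exists N; reflexivity.
    apply le_inf. intros x [n [Hn ->]]. auto. }
  split; [split|].
  - intros x x'. unfold psi_s at 1, qsupI. apply tens_sup_le.
    intros w [N ->]. apply (Hpsi x N). intros n Hn.
    eapply qle_trans; [|apply Htrans]. apply tens_mono_r, inf_le. eauto.
  - intros M HM. unfold closure.
    eapply qle_trans. rewrite <- (qtens1 V (qk V)). apply tens_mono; exact HCv.
    apply tens_sup_le_l. intros w [N ->]. apply tens_sup_le. intros w [N' ->].
    destruct (HM (Nat.max N N')) as [n [Hn HMn]].
    set (K := Nat.max N N').
    assert (HK : forall J, J <= K -> qle (c J) (c K)).
    { intros J HJ. apply le_inf. intros x [p [q [Hp [Hq ->]]]]. apply Hc; lia. }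
    eapply qle_trans. apply tens_mono; apply HK; unfold K; lia.
    eapply le_sup. exists (rep V a (s n)). split. exists n; auto. reflexivity.
    apply tens_mono.
    + unfold presheaf_hom, qinfI. apply le_inf. intros v [x ->]. apply adj1.
      unfold psi_s at 1, qsupI. apply tens_sup_le_l. intros w [J ->].
      unfold rep. eapply qle_trans; [|apply (Htrans x (s (Nat.max J K)) (s n))].
      apply tens_mono. apply inf_le. exists (Nat.max J K); split; [lia|reflexivity].
      apply Hc; lia.
    + unfold presheaf_hom, qinfI. apply le_inf. intros v [x ->]. apply adj1.
      apply (Hpsi x K). intros m Hm. unfold rep.
      eapply qle_trans; [|apply (Htrans x (s n) (s m))]. apply tens_mono_r, Hc; lia.
  - intros Hk psi Hmod Hconv.
    assert (Hint : forall x : V, qle x (qk V)).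
    { intros x. rewrite Hk. unfold qtop. apply qsup_ub. exact I. }
    assert (Htl : forall u v : V, qle (qtens u v) u).
    { intros u v. eapply qle_trans. apply tens_mono_r, Hint. rewrite qtensC, qtens1. apply qle_refl. }
    assert (Htail : forall N, qle (qk V) (qsup (fun v => exists n, N <= n /\ v = presheaf_hom V (rep V a (s n)) psi))
                  /\ qle (qk V) (qsup (fun v => exists n, N <= n /\ v = presheaf_hom V psi (rep V a (s n))))).
    { intros N. assert (HI : infinite_nat (fun n => N <= n)).
      { intros N'. exists (Nat.max N N'). split; lia. }
      specialize (Hconv _ HI). unfold closure in Hconv.
      split; (eapply qle_trans; [exact Hconv|]); apply qsup_least;
        intros x [y [[n [Hn ->]] ->]].
      - eapply le_sup. exists n; split; [exact Hn|reflexivity]. rewrite qtensC. apply Htl.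
      - eapply le_sup. exists n; split; [exact Hn|reflexivity]. apply Htl. }
    extensionality y. apply qle_antisym.
    + eapply qle_trans. rewrite <- (qtens1 V (psi y)), qtensC at 1. apply tens_mono_r, HCv.
      apply tens_sup_le. intros w [N ->].
      eapply qle_trans. rewrite <- (qtens1 V (qtens (psi y) (c N))), qtensC at 1.
      apply tens_mono_r, (proj2 (Htail N)).
      apply tens_sup_le. intros w [m [Hm ->]].
      apply (Hpsi y N). intros n Hn.
      rewrite (qtensC _ (psi y)), <- qtensA.
      eapply qle_trans. apply tens_mono_r.
      apply adj2. unfold presheaf_hom, qinfI. apply inf_le. exists y; reflexivity.
      unfold rep. rewrite qtensC.
      eapply qle_trans; [|apply (Htrans y (s m) (s n))]. apply tens_mono_r, Hc; lia.
    + unfold psi_s, qsupI. apply qsup_least. intros w [N ->].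
      eapply qle_trans. rewrite <- (qtens1 V (qinf _ _)), qtensC at 1.
      apply tens_mono_r, (proj1 (Htail N)).
      apply tens_sup_le. intros w [n [Hn ->]].
      eapply qle_trans; [|apply (Hmod y (s n))].
      apply tens_mono. apply inf_le. exists n; auto.
      eapply qle_trans. rewrite <- (qtens1 V (presheaf_hom _ _ _)) at 1.
      apply tens_mono. apply (Hrefl (s n)). apply qle_refl.
      apply adj2. unfold presheaf_hom, qinfI. apply inf_le. exists (s n); reflexivity.
Qed.
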